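(* Let $Q$ be a commutative automorphic loop of nilpotency class $3$. Then $(a,b,c)=(c,b,a)^{-1}$ and $(a,b,c)=(a,c,b)(b,a,c)$ for every $a,b,c\in Q$.
   Context: A loop is a set with a binary operation such that all left and right translations $L_a:b\mapsto ab$, $R_a:b\mapsto ba$ are bijections and there is a two-sided identity $1$. The inner mapping group is the stabilizer of $1$ in the group generated by all translations; $Q$ is automorphic if all inner mappings are automorphisms (such loops are power-associative, so inverses are two-sided). The associator $(a,b,c)$ is defined by $(ab)c=(a(bc))(a,b,c)$. The center $Z(Q)$ is the set of elements fixed by all inner mappings; $Z_0=1$, $Z_{i+1}(Q)$ is the preimage of $Z(Q/Z_i(Q))$, and $Q$ has nilpotency class $n$ if $Z_{n-1}(Q)\neq Q=Z_n(Q)$. *)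

(* Defs.v *)
From mathcomp Require Import ssreflect ssrfun ssrbool.
Set Implicit Arguments.
Unset Strict Implicit.

Section Loops.
Variable T : Type.
Variable mul : T -> T -> T.
Variable e : T.

Definition is_loop : Prop :=
  [/\ forall a, bijective (fun b => mul a b),
      forall a, bijective (fun b => mul b a),
      forall x, mul e x = x & forall x, mul x e = x].

(* Multiplication group of the loop Q/r, where r is a congruence of Q (r = eq gives
   Q itself).  Maps on the quotient are represented by maps on T respecting r;
   the group is generated by all left/right translations and their inverses. *)
Inductive mlt (r : T -> T -> Prop) : (T -> T) -> Prop :=
  | mlt_id : mlt r (fun x => x)
  | mlt_L a : mlt r (fun x => mul a x)
  | mlt_R a : mlt r (fun x => mul x a)
  | mlt_Linv a g :
      (forall x, r (mul a (g x)) x) -> (forall x, r (g (mul a x)) x) ->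
      (forall x y, r x y -> r (g x) (g y)) -> mlt r g
  | mlt_Rinv a g :
      (forall x, r (mul (g x) a) x) -> (forall x, r (g (mul x a)) x) ->
      (forall x y, r x y -> r (g x) (g y)) -> mlt r g
  | mlt_comp f g : mlt r f -> mlt r g -> mlt r (fun x => f (g x)).

Definition inner_map (r : T -> T -> Prop) (f : T -> T) : Prop :=
  mlt r f /\ r (f e) e.

(* Preimage in Q of the center of Q/r: elements whose class is fixed by all
   inner mappings of Q/r. *)
Definition center_mod (r : T -> T -> Prop) (x : T) : Prop :=
  forall f, inner_map r f -> r (f x) x.

Definition coset_rel (N : T -> Prop) (x y : T) : Prop :=
  exists n, N n /\ y = mul x n.

Fixpoint upper_center (n : nat) : T -> Prop :=
  match n with
  | 0 => fun x => x = e
  | S k => center_mod (coset_rel (upper_center k))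
  end.

Definition nilpotency_class (n : nat) : Prop :=
  (exists x, ~ upper_center (Nat.pred n) x) /\ (forall x, upper_center n x).

Definition commutative_loop : Prop := forall x y, mul x y = mul y x.

(* Automorphic: every inner mapping of Q is an automorphism (bijectivity is
   automatic since inner mappings lie in the multiplication group). *)
Definition automorphic : Prop :=
  forall f, inner_map eq f -> forall x y, f (mul x y) = mul (f x) (f y).

(* With ldiv the inverse of left translation: (ab)c = (a(bc)) (a,b,c). *)
Definition associator (ldiv : T -> T -> T) (a b c : T) : T :=
  ldiv (mul a (mul b c)) (mul (mul a b) c).

End Loops.

(* Main.v *)
Require Import Defs.
From mathcomp Require Import ssreflect ssrfun ssrbool.

Theorem lemma2p7 (T : Type) (mul : T -> T -> T) (e : T) (ldiv : T -> T -> T)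
  (hloop : is_loop mul e)
  (hldiv1 : forall a, cancel (mul a) (ldiv a))
  (hldiv2 : forall a, cancel (ldiv a) (mul a))
  (hcomm : commutative_loop mul)
  (haut : automorphic mul e)
  (hnil : nilpotency_class mul e 3) :
  forall a b c : T,
    associator mul ldiv a b c = ldiv (associator mul ldiv c b a) e /\
    associator mul ldiv a b c =
      mul (associator mul ldiv a c b) (associator mul ldiv b a c).
Proof.
case: hloop => hLb hRb he1 he2.
have rcan : forall k x y, mul x k = mul y k -> x = y.
  by move=> k x y; apply: (bij_inj (hRb k)).
have lcan : forall k x y, mul k x = mul k y -> x = y.
  by move=> k x y H; rewrite -(hldiv1 k x) H hldiv1.
have mltL : forall (r : T -> T -> Prop) x y, (forall z, r z z) ->
   (forall a x y, r x y -> r (ldiv a x) (ldiv a y)) ->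
   mlt mul r (fun t => ldiv (mul x y) (mul x (mul y t))).
  move=> r x y rr resp.
  apply: (@mlt_comp _ _ _ (ldiv (mul x y)) (fun t => mul x (mul y t))).
  - apply: (@mlt_Linv _ mul r (mul x y) (ldiv (mul x y))) => [z|z|]; rewrite ?hldiv2 ?hldiv1 //; exact: resp.
  - exact: (mlt_comp (mlt_L _ _ x) (mlt_L _ _ y)).
have fe : forall x y, ldiv (mul x y) (mul x (mul y e)) = e.
  by move=> x y; rewrite he2 -{2}(he2 (mul x y)) hldiv1.
have innL : forall (r : T -> T -> Prop) x y, (forall z, r z z) ->
   (forall a x y, r x y -> r (ldiv a x) (ldiv a y)) ->
   inner_map mul e r (fun t => ldiv (mul x y) (mul x (mul y t))).
  by move=> r x y rr resp; split; [exact: mltL | rewrite fe].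
pose Z0 := upper_center mul e 0.
pose Z1 := upper_center mul e 1.
pose Z2 := upper_center mul e 2.
pose r0 := coset_rel mul Z0.
pose r1 := coset_rel mul Z1.
pose r2 := coset_rel mul Z2.
have r0E : forall x y, r0 x y <-> y = x.
  move=> x y; split; first by case=> n [-> ->]; rewrite he2.
  by move=> ->; exists e; split=> //; rewrite he2.
have Z1nuc : forall z, Z1 z -> forall x y, mul (mul x y) z = mul x (mul y z).
  move=> z Hz x y.
  have /r0E Ez := Hz _ (innL r0 x y (fun z => proj2 (r0E z z) erefl)
     (fun a x y H => proj2 (r0E _ _) (f_equal (ldiv a) (proj1 (r0E _ _) H)))).
  by rewrite {1}Ez hldiv2.
have conv : forall f, mlt mul r0 f -> mlt mul eq f.
  move=> f; elim => //.
  - exact: mlt_id.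
  - by move=> a'; exact: mlt_L.
  - by move=> a'; exact: mlt_R.
  - move=> a' g H1 H2 _; apply: (@mlt_Linv _ mul eq a' g) => [x|x|x y ->] //;
      by apply: esym; apply/r0E; (apply: H1 || apply: H2).
  - move=> a' g H1 H2 _; apply: (@mlt_Rinv _ mul eq a' g) => [x|x|x y ->] //;
      by apply: esym; apply/r0E; (apply: H1 || apply: H2).
  - by move=> f' g _ Hf _ Hg; exact: mlt_comp.
have Z1fix : forall z f, Z1 z -> inner_map mul e r0 f -> f z = z.
  by move=> z f Hz Hf; apply: esym; apply/r0E; apply: Hz.
have innhom : forall f, inner_map mul e r0 f -> forall x y, f (mul x y) = mul (f x) (f y).
  move=> f [Hf Hfe]; apply: haut; split; first exact: conv.
  by apply: esym; apply/r0E.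
have Z1e : Z1 e by move=> f [_ H].
have Z1mul : forall z1 z2, Z1 z1 -> Z1 z2 -> Z1 (mul z1 z2).
  move=> z1 z2 H1 H2 f Hf; apply/r0E.
  by rewrite (innhom f Hf) (Z1fix z1 f H1 Hf) (Z1fix z2 f H2 Hf).
have Z1inv : forall z, Z1 z -> Z1 (ldiv z e).
  move=> z Hz f Hf; apply/r0E; apply: (lcan z).
  rewrite hldiv2 -{1}(Z1fix z f Hz Hf) -(innhom f Hf) hldiv2.
  by case: Hf => _ /r0E <-.
have Zinvr : forall z x, Z1 z -> mul (mul x z) (ldiv z e) = x.
  by move=> z x Hz; rewrite Z1nuc ?hldiv2 ?he2 //; apply: (Z1inv).
have r1refl : forall z, r1 z z by move=> z; exists e; split=> //; rewrite he2.
have r1resp : forall a x y, r1 x y -> r1 (ldiv a x) (ldiv a y).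
  move=> a' x y [k [Hk ->]]; exists k; split=> //.
  by apply: (lcan a'); rewrite hldiv2 -Z1nuc // hldiv2.
have T3 : forall n, Z2 n -> forall x y, exists n1, Z1 n1 /\
    mul (mul x y) n = mul (mul x (mul y n)) n1.
  move=> n Hn x y.
  have [n1 [Hn1 /= En]] := Hn _ (innL r1 x y r1refl r1resp).
  exists n1; split=> //.
  by rewrite {1}En -(Z1nuc n1 Hn1) hldiv2.
have resp1 : forall f, mlt mul r1 f -> forall x y, r1 x y -> r1 (f x) (f y).
  move=> f; elim.
  - by [].
  - by move=> a' x y [k [Hk ->]]; exists k; split=> //; rewrite (Z1nuc k Hk).
  - move=> a' x y [k [Hk ->]]; exists k; split=> //.
    by rewrite (hcomm (mul x k) a') -(Z1nuc k Hk) (hcomm a' x).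
  - by move=> a' g _ _ H3.
  - by move=> a' g _ _ H3.
  - by move=> f' g _ Hf _ Hg x y H; apply: Hf; apply: Hg.
have Z2mulZ1 : forall n z, Z2 n -> Z1 z -> Z2 (mul n z).
  move=> n z Hn Hz f Hf.
  have [n3 [Hn3 E3]] := Hn f Hf.
  have [n4 [Hn4 E4]] := resp1 f (proj1 Hf) n (mul n z) (ex_intro _ z (conj Hz erefl)).
  exists (mul (ldiv n4 e) (mul n3 z)); split.
    by apply: (Z1mul); [apply: (Z1inv) | apply: (Z1mul)].
  rewrite E4 -(Z1nuc _ (Z1mul _ _ Hn3 Hz)) (Zinvr n4 _ Hn4) {1}E3.
  by rewrite (Z1nuc z Hz).
have Z2e : Z2 e by move=> f [_ H].
have r2refl : forall z, r2 z z by move=> z; exists e; split=> //; rewrite he2.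
have r2resp : forall a x y, r2 x y -> r2 (ldiv a x) (ldiv a y).
  move=> a' x y [n [Hn ->]].
  have [n1 [Hn1 E]] := T3 n Hn a' (ldiv a' x).
  exists (mul n n1); split; first exact: (Z2mulZ1).
  apply: (lcan a'); rewrite !hldiv2.
  rewrite hldiv2 in E.
  by rewrite E !(Z1nuc n1 Hn1).
have assocZ2 : forall a b c, Z2 (ldiv (mul a (mul b c)) (mul (mul a b) c)).
  move=> a' b' c'.
  have [n [Hn /= Ec]] := (proj2 hnil) c' _ (innL r2 a' b' r2refl r2resp).
  have [n1 [Hn1 E]] := T3 n Hn (mul a' b') (ldiv (mul a' b') (mul a' (mul b' c'))).
  rewrite hldiv2 -Ec in E.
  have -> : ldiv (mul a' (mul b' c')) (mul (mul a' b') c') = mul n (ldiv n1 e).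
    apply: (lcan (mul a' (mul b' c'))); rewrite hldiv2.
    by rewrite -(Z1nuc _ (Z1inv n1 Hn1)) E Zinvr.
  by apply: (Z2mulZ1) => //; apply: (Z1inv).
have FactM : forall m, Z2 m -> forall x t, exists k, Z1 k /\
    mul x (mul m t) = mul (mul (mul x m) t) k.
  move=> m Hm x t.
  have [n1 [Hn1 E1]] := T3 m Hm x t.
  have [n2 [Hn2 E2]] := T3 m Hm t x.
  rewrite (hcomm t x) E1 in E2.
  exists (mul n2 (ldiv n1 e)); split; first by apply: (Z1mul) => //; apply: (Z1inv).
  rewrite -(Z1nuc _ (Z1inv _ Hn1)) -(hcomm t (mul x m)) -E2 Zinvr //.
  by rewrite (hcomm m t).
have pairZ1 : forall k1 k2 x y, Z1 k1 -> Z1 k2 ->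
    mul (mul x k1) (mul y k2) = mul (mul x y) (mul k1 k2).
  move=> k1 k2 x y H1 H2.
  rewrite -(Z1nuc k2 H2 (mul x k1) y) (hcomm (mul x k1) y) -(Z1nuc k1 H1 y x).
  by rewrite (hcomm y x) (Z1nuc k2 H2).
have Key : forall m x a b c y, Z2 m ->
    y = ldiv (mul a (mul b c)) (mul (mul a b) c) ->
    mul (mul x m) y = mul x (mul m y).
  move=> m x a' b' c' y Hm Ey.
  pose f := fun t => ldiv (mul x m) (mul x (mul m t)).
  have Hf : inner_map mul e eq f.
    exact: (innL eq x m (fun z => erefl) (fun a x y H => f_equal _ H)).
  have hom := haut f Hf.
  have fk : forall t, exists k, Z1 k /\ f t = mul t k.
    move=> t; have [k [Hk E]] := FactM m Hm x t; exists k; split=> //.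
    by rewrite /f E (Z1nuc k Hk (mul x m) t) hldiv1.
  have [k1 [H1 E1]] := fk a'.
  have [k2 [H2 E2]] := fk b'.
  have [k3 [H3 E3]] := fk c'.
  have [k4 [H4 E4]] := fk y.
  have H12 := Z1mul _ _ H1 H2.
  have Eu : f (mul (mul a' b') c') = mul (mul (mul a' b') c') (mul (mul k1 k2) k3).
    by rewrite !hom E1 E2 E3 (pairZ1 k1 k2) // (pairZ1 (mul k1 k2) k3).
  have Ev : f (mul a' (mul b' c')) = mul (mul a' (mul b' c')) (mul (mul k1 k2) k3).
    rewrite !hom E1 E2 E3 (pairZ1 k2 k3) // (pairZ1 k1 (mul k2 k3)) //;
      last by apply: (Z1mul).
    by rewrite (Z1nuc k3 H3).
  have Hy : mul (mul a' (mul b' c')) y = mul (mul a' b') c' by rewrite Ey hldiv2.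
  have := f_equal f Hy.
  rewrite hom Ev E4 (pairZ1 _ k4) //; last by apply: (Z1mul).
  rewrite Hy Eu => /lcan.
  rewrite hcomm -{2}(he1 (mul (mul k1 k2) k3)) => /rcan Ek4.
  rewrite Ek4 he2 in E4.
  by rewrite -{1}E4 /f hldiv2.
move=> a b c; rewrite /associator.
have Eq1 : mul c (mul b a) = mul (mul a b) c by rewrite (hcomm b a) hcomm.
have Eq2 : mul (mul c b) a = mul a (mul b c) by rewrite hcomm (hcomm c b).
split.
  have K1 := Key _ (mul (mul a b) c) a b c _ (assocZ2 c b a) erefl.
  rewrite Eq1 Eq2 !hldiv2 in K1.
  rewrite Eq1 Eq2.
  have Hqp : mul (ldiv (mul (mul a b) c) (mul a (mul b c)))
                 (ldiv (mul a (mul b c)) (mul (mul a b) c)) = e.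
    apply: (lcan (mul (mul a b) c)); rewrite he2.
    by rewrite -K1.
  by rewrite -Hqp hldiv1.
have Ht : ldiv (mul b (mul a c)) (mul (mul b a) c)
          = ldiv (mul (mul a c) b) (mul (mul a b) c).
  by rewrite (hcomm b a) (hcomm b (mul a c)).
have Hs := assocZ2 a c b.
rewrite (hcomm c b) in Hs.
have K2 := Key _ (mul a (mul b c)) b a c _ Hs (esym Ht).
rewrite !hldiv2 in K2.
rewrite Ht (hcomm c b).
by rewrite {1}K2 hldiv1.
Qed.
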